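(* Let $X$ be a Banach space of analytic functions on $\mathbb{U}$ such that $X\hookrightarrow H_1$, and let $E$ be an order-continuous Banach sequence lattice. If $\lambda\in E$, then the multiplier operator $M_\lambda\colon X\to E$, $M_\lambda f=\{\lambda_n\hat f(n)\}$, is (well defined, bounded and) compact.
   Context: $\mathbb{U}$ is the open unit disk, $H_1$ the Hardy space on $\mathbb{U}$, $f=\sum_{n\ge0}\hat f(n)z^n$ the Taylor expansion; ''$\hookrightarrow$'' denotes continuous inclusion. A Banach sequence lattice on $\mathbb{Z}_+$ is a Banach space $E$ of sequences with $|y_n|\le|x_n|$ for all $n$, $x\in E$ implying $y\in E$ and $\|y\|_E\le\|x\|_E$. It is order-continuous if every nonnegative nonincreasing sequence in $E$ converging to $0$ pointwise converges to $0$ in norm. $\{e_n\}$ denotes the standard unit vectors. *)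

(* Defs.v *)
From Stdlib Require Import Reals.
From Coquelicot Require Import Coquelicot.
Open Scope R_scope.

Definition seqC := nat -> C.

Definition sadd (a b : seqC) : seqC := fun n => Cplus (a n) (b n).
Definition sscal (c : C) (a : seqC) : seqC := fun n => Cmult c (a n).
Definition ssub (a b : seqC) : seqC := fun n => Cminus (a n) (b n).
Definition szero : seqC := fun _ => RtoC 0.

(** Sum of a complex series, computed componentwise (meaningful when the
    series converges). *)
Definition Csum (u : nat -> C) : C :=
  (Series (fun n => Re (u n)), Series (fun n => Im (u n))).

(** A function analytic on the open unit disk U is identified with its
    Taylor coefficient sequence [a] (so [a n] is \hat f(n)); the requirement
    is that the Taylor series converges at every point of U. *)
Definition analytic_on_U (a : seqC) : Prop :=
  forall z : C, Cmod z < 1 -> @ex_pseries C_AbsRing C_NormedModule a z.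

Definition fval (a : seqC) (z : C) : C :=
  Csum (fun n => Cmult (a n) (Cpow z n)).

Definition M1 (a : seqC) (r : R) : R :=
  / (2 * PI) * RInt (fun t => Cmod (fval a (r * cos t, r * sin t))) 0 (2 * PI).

Definition H1_norm_le (a : seqC) (M : R) : Prop :=
  forall r, 0 <= r < 1 -> M1 a r <= M.

Definition is_subspace (S : seqC -> Prop) : Prop :=
  S szero /\
  (forall a b, S a -> S b -> S (sadd a b)) /\
  (forall c a, S a -> S (sscal c a)).

Definition is_norm_on (S : seqC -> Prop) (N : seqC -> R) : Prop :=
  (forall a, S a -> 0 <= N a) /\
  (forall a, S a -> N a = 0 -> forall n, a n = RtoC 0) /\
  (forall c a, S a -> N (sscal c a) = Cmod c * N a) /\
  (forall a b, S a -> S b -> N (sadd a b) <= N a + N b).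

Definition is_complete (S : seqC -> Prop) (N : seqC -> R) : Prop :=
  forall u : nat -> seqC, (forall k, S (u k)) ->
    (forall eps, 0 < eps -> exists K, forall k l, (K <= k)%nat -> (K <= l)%nat ->
        N (ssub (u k) (u l)) < eps) ->
    exists g, S g /\ is_lim_seq (fun k => N (ssub (u k) g)) 0.

Definition is_Banach (S : seqC -> Prop) (N : seqC -> R) : Prop :=
  is_subspace S /\ is_norm_on S N /\ is_complete S N.

Definition Banach_space_of_analytic_functions (X : seqC -> Prop) (N : seqC -> R) : Prop :=
  is_Banach X N /\ (forall f, X f -> analytic_on_U f).

Definition embeds_in_H1 (X : seqC -> Prop) (N : seqC -> R) : Prop :=
  exists C0 : R, forall f, X f -> H1_norm_le f (C0 * N f).

Definition Banach_sequence_lattice (E : seqC -> Prop) (N : seqC -> R) : Prop :=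
  is_Banach E N /\
  (forall x y, E x -> (forall n, Cmod (y n) <= Cmod (x n)) -> E y /\ N y <= N x).

Definition order_continuous (E : seqC -> Prop) (N : seqC -> R) : Prop :=
  forall x : nat -> seqC,
    (forall k, E (x k)) ->
    (forall k n, Im (x k n) = 0 /\ 0 <= Re (x k n)) ->
    (forall k n, Re (x (S k) n) <= Re (x k n)) ->
    (forall n, is_lim_seq (fun k => Re (x k n)) 0) ->
    is_lim_seq (fun k => N (x k)) 0.

Definition mult_op (lam : seqC) (f : seqC) : seqC := fun n => Cmult (lam n) (f n).

Definition compact_op (X : seqC -> Prop) (NX : seqC -> R)
    (E : seqC -> Prop) (NE : seqC -> R) (T : seqC -> seqC) : Prop :=
  forall u : nat -> seqC, (forall k, X (u k)) ->
    (exists B, forall k, NX (u k) <= B) ->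
    exists (phi : nat -> nat) (g : seqC),
      (forall k, (phi k < phi (S k))%nat) /\ E g /\
      is_lim_seq (fun k => NE (ssub (T (u (phi k))) g)) 0.

(* Main.v *)
Require Import Defs.
From Stdlib Require Import Reals Lra Lia Psatz ClassicalEpsilon ZArith Arith.
From Coquelicot Require Import Coquelicot.
Open Scope R_scope.

Fixpoint psum (x : nat -> R) (N : nat) : R :=
  match N with O => 0 | S N => psum x N + x N end.

Lemma Cpow_circle r t k :
  Cpow (r * cos t, r * sin t) k = (r ^ k * cos (INR k * t), r ^ k * sin (INR k * t)).
Proof.
  induction k as [|k IH].
  - simpl. rewrite Rmult_0_l, cos_0, sin_0. unfold RtoC. f_equal; ring.
  - simpl Cpow. rewrite IH. rewrite S_INR.
    replace ((INR k + 1) * t) with (INR k * t + t) by ring.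
    rewrite cos_plus, sin_plus. unfold Cmult. simpl. f_equal; ring.
Qed.

Lemma Series_split (x : nat -> R) N :
  ex_series x -> Series x = psum x N + Series (fun k => x (N + k)%nat).
Proof.
  intros Hx. induction N as [|N IH].
  - simpl. rewrite Rplus_0_l. apply Series_ext. intros; reflexivity.
  - rewrite IH. simpl psum.
    rewrite (Series_incr_1 (fun k => x (N + k)%nat)).
    2:{ apply (ex_series_incr_n x N). exact Hx. }
    rewrite Nat.add_0_r. rewrite Rplus_assoc. f_equal. f_equal.
    apply Series_ext. intros k. f_equal. lia.
Qed.

Lemma geom_ex (K q : R) : 0 <= q < 1 -> ex_series (fun k => K * q ^ k).
Proof.
  intros Hq. exists (K * / (1 - q)).
  exact (is_series_scal_l (K:=R_AbsRing) (V:=R_NormedModule) K (fun n => q ^ n) _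
    (is_series_geom q ltac:(rewrite Rabs_pos_eq; lra))).
Qed.

Lemma tail_bound (x : nat -> R) K q N :
  0 <= q < 1 -> (forall k, Rabs (x k) <= K * q ^ k) ->
  ex_series x /\ Rabs (Series x - psum x N) <= K * q ^ N / (1 - q).
Proof.
  intros Hq Hb.
  assert (Hex : ex_series x).
  { apply (ex_series_le (K:=R_AbsRing) (V:=R_CompleteNormedModule) x (fun k => K * q ^ k)).
    - intros n. exact (Hb n).
    - apply geom_ex; auto. }
  split; auto.
  rewrite (Series_split x N Hex).
  replace (psum x N + Series (fun k => x (N + k)%nat) - psum x N)
    with (Series (fun k => x (N + k)%nat)) by ring.
  assert (Hex2 : ex_series (fun k => Rabs (x (N + k)%nat))).
  { apply (ex_series_le (K:=R_AbsRing) (V:=R_CompleteNormedModule) _ (fun k => (K * q ^ N) * q ^ k)).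
    - intros n. unfold norm; simpl. rewrite Rabs_Rabsolu.
      rewrite Rmult_assoc, <- pow_add. apply Hb.
    - apply geom_ex; auto. }
  eapply Rle_trans. apply Series_Rabs; auto.
  eapply Rle_trans. apply (Series_le _ (fun k => (K * q ^ N) * q ^ k)).
  - intros n. split. apply Rabs_pos. rewrite Rmult_assoc, <- pow_add. apply Hb.
  - apply geom_ex; auto.
  - rewrite Series_scal_l, Series_geom. unfold Rdiv; lra.
    rewrite Rabs_pos_eq; lra.
Qed.

Lemma unif_cont (h : nat -> R -> R) (f : R -> R) :
  (forall N t, continuity_pt (h N) t) ->
  (forall eps, 0 < eps -> exists N, forall t, Rabs (f t - h N t) <= eps) ->
  forall t, continuity_pt f t.
Proof.
  intros Hc Hu t eps Heps.
  destruct (Hu (eps / 3)) as [N HN]. lra.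
  destruct (Hc N t (eps / 3)) as [del [Hdel Hd]]. lra.
  exists del. split; auto. intros y [Hdy Hy].
  specialize (Hd y (conj Hdy Hy)). simpl in *. unfold R_dist in *.
  pose proof (HN y). pose proof (HN t).
  revert Hd H H0. generalize (f y) (f t) (h N y) (h N t). intros a b c d.
  unfold Rabs; repeat destruct Rcase_abs; lra.
Qed.


Lemma fin_bound (f : nat -> R) N : exists K, 0 <= K /\ forall k, (k < N)%nat -> f k <= K.
Proof.
  induction N as [|N [K [HK HN]]].
  - exists 0. split; [lra|]. intros; lia.
  - exists (Rmax K (f N)). split. eapply Rle_trans; [apply HK|apply Rmax_l].
    intros k Hk. destruct (Nat.eq_dec k N) as [->|Hne]. apply Rmax_r.
    eapply Rle_trans; [apply HN; lia|apply Rmax_l].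
Qed.

Lemma coef_bounded (a : seqC) (r : R) :
  analytic_on_U a -> 0 <= r < 1 -> exists K, 0 <= K /\ forall k, Cmod (a k) * r ^ k <= K.
Proof.
  intros Ha Hr.
  assert (Hz : Cmod (RtoC r) < 1) by (rewrite Cmod_R, Rabs_pos_eq; lra).
  pose proof (Cauchy_ex_series _ (Ha _ Hz)) as HC.
  destruct (HC (mkposreal 1 Rlt_0_1)) as [N HN].
  destruct (fin_bound (fun k => Cmod (a k) * r ^ k) N) as [K [HK HKN]].
  exists (Rmax K 1). split. eapply Rle_trans; [apply HK|apply Rmax_l].
  intros k. destruct (Nat.lt_ge_cases k N) as [Hk|Hk].
  - eapply Rle_trans; [apply HKN; auto|apply Rmax_l].
  - specialize (HN k k Hk Hk). rewrite sum_n_n in HN. simpl in HN.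
    idtac "HN". 
    change (Cmod (Cmult (Cpow (RtoC r) k) (a k)) < 1) in HN.
    rewrite Cmod_mult, Cmod_pow, Cmod_R, Rabs_pos_eq in HN by lra.
    eapply Rle_trans; [|apply Rmax_r]. lra.
Qed.

Lemma Cmod_le_sum (x : C) : Cmod x <= Rabs (Re x) + Rabs (Im x).
Proof.
  unfold Cmod. rewrite <- (sqrt_Rsqr (Rabs (Re x) + Rabs (Im x))).
  2:{ pose proof (Rabs_pos (Re x)); pose proof (Rabs_pos (Im x)); lra. }
  apply sqrt_le_1_alt. unfold Rsqr.
  rewrite <- (pow2_abs (fst x)), <- (pow2_abs (snd x)). unfold Re, Im.
  pose proof (Rabs_pos (fst x)); pose proof (Rabs_pos (snd x)). nra.
Qed.

Lemma CS (p q U V al be : R) : al ^ 2 + be ^ 2 = 1 ->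
  Rabs (p * (U * al + V * be) - q * (V * al - U * be)) <=
  sqrt (p ^ 2 + q ^ 2) * sqrt (U ^ 2 + V ^ 2).
Proof.
  intros H. rewrite <- sqrt_mult by nra.
  rewrite <- sqrt_Rsqr_abs. apply sqrt_le_1_alt. unfold Rsqr.
  set (A := p * al + q * be). set (B := p * be - q * al).
  replace (p * (U * al + V * be) - q * (V * al - U * be)) with (A * U + B * V) by (unfold A, B; ring).
  replace ((p ^ 2 + q ^ 2) * (U ^ 2 + V ^ 2)) with ((A ^ 2 + B ^ 2) * (U ^ 2 + V ^ 2)).
  pose proof (pow2_ge_0 (A * V - B * U)).
  replace ((A ^ 2 + B ^ 2) * (U ^ 2 + V ^ 2)) with ((A * U + B * V) * (A * U + B * V) + (A * V - B * U) ^ 2) by ring.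
  lra.
  f_equal. unfold A, B. replace (p^2 + q^2) with ((p^2+q^2) * (al^2 + be^2)) by (rewrite H; ring). ring.
Qed.

Lemma sqrt_le_sum (U V : R) : sqrt (U ^ 2 + V ^ 2) <= Rabs U + Rabs V.
Proof.
  pose proof (Cmod_le_sum (U, V)). unfold Cmod in H. simpl in H. exact H.
Qed.


Ltac cont := first [assumption | apply continuous_const | lazymatch goal with
  | |- continuous (fun t => Rmult (@?f t) (@?g t)) _ =>
      apply (continuous_mult (K:=R_AbsRing) f g); cont
  | |- continuous (fun t => Rminus (@?f t) (@?g t)) _ =>
      apply (continuous_minus (K:=R_AbsRing) (V:=R_NormedModule) f g); cont
  | |- continuous (fun t => Rplus (@?f t) (@?g t)) _ =>
      apply (continuous_plus (K:=R_AbsRing) (V:=R_NormedModule) f g); cont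
  | |- continuous (fun t => cos (@?x t)) _ =>
      apply (ex_derive_continuous (K:=R_AbsRing) (V:=R_NormedModule)); auto_derive; auto
  | |- continuous (fun t => sin (@?x t)) _ =>
      apply (ex_derive_continuous (K:=R_AbsRing) (V:=R_NormedModule)); auto_derive; auto
  | _ => idtac
  end].

Definition cc (a : seqC) k t := Re (a k) * cos (INR k * t) - Im (a k) * sin (INR k * t).
Definition dd (a : seqC) k t := Re (a k) * sin (INR k * t) + Im (a k) * cos (INR k * t).

Lemma fval_circle a r t :
  fval a (r * cos t, r * sin t) =
  (Series (fun k => r ^ k * cc a k t), Series (fun k => r ^ k * dd a k t)).
Proof.
  unfold fval, Csum. f_equal; apply Series_ext; intros k; rewrite Cpow_circle;
  unfold Cmult, cc, dd, Re, Im; simpl; ring.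
Qed.

Lemma psum_cont (F : nat -> R -> R) N t :
  (forall k, continuous (F k) t) -> continuous (fun t => psum (fun k => F k t) N) t.
Proof.
  intros H. induction N as [|N IH]; simpl.
  - apply continuous_const.
  - apply (continuous_plus (K:=R_AbsRing) (V:=R_NormedModule) (fun t => psum (fun k => F k t) N) (F N)); auto.
Qed.

Lemma psum_RInt (F : nat -> R -> R) (I : nat -> R) a b N :
  (forall k, is_RInt (F k) a b (I k)) ->
  is_RInt (fun t => psum (fun k => F k t) N) a b (psum I N).
Proof.
  intros H. induction N as [|N IH]; simpl.
  - pose proof (is_RInt_const (V:=R_NormedModule) a b 0).
    assert (E : scal (b - a) (0:R_NormedModule) = 0).
    { change (Rmult (b - a) 0 = 0). ring. }
    rewrite E in H0. exact H0.
  - exact (is_RInt_plus (V:=R_NormedModule) _ _ a b _ _ IH (H N)).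
Qed.

Lemma psum_delta0 (X : R) n M : (M <= n)%nat ->
  psum (fun k => if Nat.eq_dec k n then X else 0) M = 0.
Proof.
  induction M as [|M IH]; intros H; simpl. reflexivity.
  destruct (Nat.eq_dec M n); [lia|]. rewrite IH by lia. ring.
Qed.

Lemma psum_delta (X : R) n N : (n < N)%nat ->
  psum (fun k => if Nat.eq_dec k n then X else 0) N = X.
Proof.
  induction N as [|N IH]; intros H; [lia|]. simpl.
  destruct (Nat.eq_dec N n) as [->|Hne].
  - rewrite psum_delta0 by lia. ring.
  - rewrite IH by lia. ring.
Qed.

Lemma int_part (k n : nat) : exists m : Z, (INR k - INR n) = IZR m.
Proof.
  exists (Z.of_nat k - Z.of_nat n)%Z. rewrite minus_IZR, <- !INR_IZR_INZ. reflexivity.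
Qed.

Lemma sin_2PI_int (j : R) (m : Z) : j = IZR m -> sin (j * (2 * PI)) = 0.
Proof.
  intros ->. apply sin_eq_0_1. exists (2 * m)%Z. rewrite mult_IZR. ring.
Qed.

Lemma cos_2PI_int (j : R) (m : Z) : j = IZR m -> cos (j * (2 * PI)) = 1.
Proof.
  intros Hj. replace (j * (2 * PI)) with (2 * (j * PI)) by ring.
  rewrite cos_2a_sin. rewrite (sin_eq_0_1 (j * PI)). ring. exists m. rewrite Hj. ring.
Qed.

Lemma is_RInt_cst (c a b : R) : is_RInt (fun _ => c) a b ((b - a) * c).
Proof. pose proof (is_RInt_const (V:=R_NormedModule) a b c) as H. exact H. Qed.

Lemma RInt_deriv (f df : R -> R) a b :
  (forall x, Rmin a b <= x <= Rmax a b -> is_derive f x (df x)) ->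
  (forall x, Rmin a b <= x <= Rmax a b -> continuous df x) ->
  is_RInt df a b (f b - f a).
Proof. intros H1 H2. pose proof (is_RInt_derive (V:=R_CompleteNormedModule) f df a b H1 H2) as H. exact H. Qed.

Lemma int_cos (k n : nat) :
  is_RInt (fun t => cos ((INR k - INR n) * t)) 0 (2 * PI)
    (if Nat.eq_dec k n then 2 * PI else 0).
Proof.
  destruct (Nat.eq_dec k n) as [->|Hne].
  - assert (Hc := is_RInt_cst 1 0 (2*PI)). replace ((2*PI-0)*1) with (2*PI) in Hc by ring.
    eapply is_RInt_ext; [|exact Hc].
    intros x _. simpl. replace ((INR n - INR n) * x) with 0 by ring. rewrite cos_0. reflexivity.
  - set (j := INR k - INR n).
    assert (Hj : j <> 0). { unfold j. intro H. apply Hne. apply INR_eq. lra. }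
    destruct (int_part k n) as [m Hm]. fold j in Hm.
    pose proof (RInt_deriv (fun t => sin (j * t) / j) (fun t => cos (j * t)) 0 (2 * PI)) as H.
    assert (E : sin (j * (2 * PI)) / j - sin (j * 0) / j = 0).
    { rewrite (sin_2PI_int j m Hm). rewrite Rmult_0_r, sin_0. field. auto. }
    cbv beta in H. rewrite E in H. apply H.
    + intros x _. auto_derive. auto. field. auto.
    + intros x _. apply (ex_derive_continuous (K:=R_AbsRing) (V:=R_NormedModule)). auto_derive. auto.
Qed.

Lemma int_sin (k n : nat) :
  is_RInt (fun t => sin ((INR k - INR n) * t)) 0 (2 * PI) 0.
Proof.
  destruct (Nat.eq_dec k n) as [->|Hne].
  - assert (Hc := is_RInt_cst 0 0 (2*PI)). replace ((2*PI-0)*0) with 0 in Hc by ring.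
    eapply is_RInt_ext; [|exact Hc].
    intros x _. simpl. replace ((INR n - INR n) * x) with 0 by ring. rewrite sin_0. reflexivity.
  - set (j := INR k - INR n).
    assert (Hj : j <> 0). { unfold j. intro H. apply Hne. apply INR_eq. lra. }
    destruct (int_part k n) as [m Hm]. fold j in Hm.
    pose proof (RInt_deriv (fun t => - cos (j * t) / j) (fun t => sin (j * t)) 0 (2 * PI)) as H.
    assert (E : - cos (j * (2 * PI)) / j - - cos (j * 0) / j = 0).
    { rewrite (cos_2PI_int j m Hm). rewrite Rmult_0_r, cos_0. field. auto. }
    cbv beta in H. rewrite E in H. apply H.
    + intros x _. auto_derive. auto. field. auto.
    + intros x _. cont.
Qed.


Lemma im_le_Cmod (c : C) : Rabs (Im c) <= Cmod c.
Proof.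
  unfold Cmod. rewrite <- sqrt_Rsqr_abs. apply sqrt_le_1_alt. unfold Rsqr, Im.
  pose proof (pow2_ge_0 (fst c)). simpl. nra.
Qed.

Lemma small_tail (K q : R) : 0 <= q < 1 -> 0 <= K ->
  forall eps, 0 < eps -> exists N0, forall N, (N0 <= N)%nat -> K * q ^ N / (1 - q) <= eps.
Proof.
  intros Hq HK eps He.
  pose proof (is_lim_seq_geom q ltac:(rewrite Rabs_pos_eq; lra)) as H.
  apply is_lim_seq_Reals in H.
  destruct (H (eps * (1 - q) / (K + 1))) as [N0 HN0].
  { apply Rdiv_lt_0_compat; nra. }
  exists N0. intros N HN. specialize (HN0 N HN). unfold R_dist in HN0.
  rewrite Rminus_0_r, Rabs_pos_eq in HN0 by (apply pow_le; lra).
  apply Rle_trans with (K * (eps * (1 - q) / (K + 1)) / (1 - q)).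
  - unfold Rdiv. apply Rmult_le_compat_r. apply Rlt_le, Rinv_0_lt_compat; lra.
    apply Rmult_le_compat_l; lra.
  - replace (K * (eps * (1 - q) / (K + 1)) / (1 - q)) with (eps * (K / (K + 1))) by (field; lra).
    assert (K / (K + 1) <= 1). { apply Rmult_le_reg_r with (K + 1). lra. unfold Rdiv. rewrite Rmult_assoc, Rinv_l; lra. }
    nra.
Qed.

Lemma cc_bound a k t : Rabs (cc a k t) <= 2 * Cmod (a k).
Proof.
  unfold cc. pose proof (re_le_Cmod (a k)). pose proof (im_le_Cmod (a k)).
  pose proof (COS_bound (INR k * t)). pose proof (SIN_bound (INR k * t)).
  eapply Rle_trans. apply Rabs_triang_inv2 || apply Rabs_triang. 
  rewrite Rabs_Ropp, !Rabs_mult.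
  assert (Rabs (cos (INR k * t)) <= 1) by (apply Rabs_le; lra).
  assert (Rabs (sin (INR k * t)) <= 1) by (apply Rabs_le; lra).
  pose proof (Rabs_pos (Re (a k))). pose proof (Rabs_pos (Im (a k))). nra.
Qed.

Lemma dd_bound a k t : Rabs (dd a k t) <= 2 * Cmod (a k).
Proof.
  unfold dd. pose proof (re_le_Cmod (a k)). pose proof (im_le_Cmod (a k)).
  pose proof (COS_bound (INR k * t)). pose proof (SIN_bound (INR k * t)).
  eapply Rle_trans. apply Rabs_triang.
  rewrite !Rabs_mult.
  assert (Rabs (cos (INR k * t)) <= 1) by (apply Rabs_le; lra).
  assert (Rabs (sin (INR k * t)) <= 1) by (apply Rabs_le; lra).
  pose proof (Rabs_pos (Re (a k))). pose proof (Rabs_pos (Im (a k))). nra.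
Qed.

Definition phi_form (p q U V : R) (n : nat) (t : R) :=
  p * (U * cos (INR n * t) + V * sin (INR n * t)) - q * (V * cos (INR n * t) - U * sin (INR n * t)).

Lemma phi_form_bound p q U V n t :
  Rabs (phi_form p q U V n t) <= sqrt (p ^ 2 + q ^ 2) * sqrt (U ^ 2 + V ^ 2).
Proof.
  unfold phi_form. apply CS. pose proof (sin2_cos2 (INR n * t)). unfold Rsqr in H. nra.
Qed.

Lemma phi_form_minus p q U1 V1 U2 V2 n t :
  phi_form p q U1 V1 n t - phi_form p q U2 V2 n t = phi_form p q (U1 - U2) (V1 - V2) n t.
Proof. unfold phi_form. ring. Qed.

Lemma psum_ext (x y : nat -> R) N : (forall k, x k = y k) -> psum x N = psum y N.
Proof. intros H. induction N; simpl; auto. rewrite IHN, H. auto. Qed.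

Definition term_k (a : seqC) (r : R) (n k : nat) (t : R) :=
  (r ^ k * (Re (a n) * Re (a k) + Im (a n) * Im (a k))) * cos ((INR k - INR n) * t)
  - (r ^ k * (Re (a n) * Im (a k) - Im (a n) * Re (a k))) * sin ((INR k - INR n) * t).

Lemma phiN_eq a r n N t :
  phi_form (Re (a n)) (- Im (a n)) (psum (fun k => r ^ k * cc a k t) N)
     (psum (fun k => r ^ k * dd a k t) N) n t
  = psum (fun k => term_k a r n k t) N.
Proof.
  induction N as [|N IH]; simpl.
  - unfold phi_form. ring.
  - rewrite <- IH. unfold phi_form, term_k, cc, dd.
    replace ((INR N - INR n) * t) with (INR N * t - INR n * t) by ring.
    rewrite cos_minus, sin_minus. ring.
Qed.

Lemma is_RInt_lin (f g : R -> R) a b If Ig c1 c2 :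
  is_RInt f a b If -> is_RInt g a b Ig ->
  is_RInt (fun t => c1 * f t - c2 * g t) a b (c1 * If - c2 * Ig).
Proof.
  intros Hf Hg.
  pose proof (is_RInt_minus (V:=R_NormedModule) _ _ a b _ _
     (is_RInt_scal (V:=R_NormedModule) f a b c1 If Hf)
     (is_RInt_scal (V:=R_NormedModule) g a b c2 Ig Hg)) as H. exact H.
Qed.

Lemma phiN_int a r n N : (n < N)%nat ->
  is_RInt (fun t => psum (fun k => term_k a r n k t) N) 0 (2 * PI)
    (r ^ n * Cmod (a n) ^ 2 * (2 * PI)).
Proof.
  intros HN.
  pose proof (psum_RInt (term_k a r n)
     (fun k => (r ^ k * (Re (a n) * Re (a k) + Im (a n) * Im (a k))) * (if Nat.eq_dec k n then 2 * PI else 0)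
               - (r ^ k * (Re (a n) * Im (a k) - Im (a n) * Re (a k))) * 0) 0 (2 * PI) N) as H.
  rewrite (psum_ext _ (fun k => if Nat.eq_dec k n then r ^ n * Cmod (a n) ^ 2 * (2 * PI) else 0)) in H.
  - rewrite psum_delta in H by auto. apply H. intros k. unfold term_k.
    apply is_RInt_lin. apply int_cos. apply int_sin.
  - intros k. destruct (Nat.eq_dec k n) as [->|]. rewrite Cmod2_alt. ring. ring.
Qed.

Lemma cont_pt_of (f : R -> R) t : continuous f t -> continuity_pt f t.
Proof. intros H. apply continuity_pt_filterlim. exact H. Qed.
Lemma of_cont_pt (f : R -> R) t : continuity_pt f t -> continuous f t.
Proof. intros H. apply continuity_pt_filterlim. exact H. Qed.

Lemma eps_le (x y c : R) : 0 <= c -> (forall eps, 0 < eps -> x <= y + c * eps) -> x <= y.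
Proof.
  intros Hc H. destruct (Rle_dec x y) as [|Hn]; auto. exfalso.
  specialize (H ((x - y) / (2 * (c + 1)))).
  assert (0 < (x - y) / (2 * (c + 1))) by (apply Rdiv_lt_0_compat; lra).
  specialize (H H0).
  assert (c * ((x - y) / (2 * (c + 1))) < x - y).
  { replace (c * ((x - y) / (2 * (c + 1)))) with ((x - y) * (c / (2 * (c + 1)))) by (field; lra).
    assert (c / (2 * (c + 1)) < 1).
    { apply Rmult_lt_reg_r with (2 * (c + 1)). lra. unfold Rdiv. rewrite Rmult_assoc, Rinv_l; lra. }
    nra. }
  lra.
Qed.

Lemma exRc (f : R -> R) a b : (forall z, continuous f z) -> ex_RInt f a b.
Proof. intros H. pose proof (ex_RInt_continuous (V:=R_CompleteNormedModule) f a b (fun z _ => H z)) as E. exact E. Qed.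

Section Coef.
Variable a : seqC.
Variable r : R.
Variable n : nat.
Hypothesis Ha : analytic_on_U a.
Hypothesis Hr : 0 < r < 1.

Let uP N t := psum (fun k => r ^ k * cc a k t) N.
Let vP N t := psum (fun k => r ^ k * dd a k t) N.
Let uS t := Series (fun k => r ^ k * cc a k t).
Let vS t := Series (fun k => r ^ k * dd a k t).

Lemma unif_tails : exists K q, 0 <= K /\ 0 <= q < 1 /\
  forall N t, Rabs (uS t - uP N t) <= K * q ^ N / (1 - q) /\
              Rabs (vS t - vP N t) <= K * q ^ N / (1 - q).
Proof.
  set (r' := (1 + r) / 2).
  destruct (coef_bounded a r' Ha ltac:(unfold r'; lra)) as [K [HK HKb]].
  set (q := r / r').
  assert (Hq : 0 <= q < 1).
  { unfold q, r'. split. apply Rle_mult_inv_pos; lra.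
    apply Rmult_lt_reg_r with ((1 + r) / 2). lra. unfold Rdiv. rewrite Rmult_assoc, Rinv_l; lra. }
  exists (2 * K), q. split; [lra|]. split; [auto|].
  assert (Hrk : forall k, r ^ k * (2 * Cmod (a k)) <= 2 * K * q ^ k).
  { intros k. replace r with (q * r') by (unfold q, r'; field; lra).
    rewrite Rpow_mult_distr. specialize (HKb k). pose proof (pow_le q k (proj1 Hq)).
    pose proof (pow_le r' k ltac:(unfold r'; lra)). pose proof (Cmod_ge_0 (a k)). nra. }
  intros N t. split.
  - apply (tail_bound (fun k => r ^ k * cc a k t) (2 * K) q N Hq).
    intros k. rewrite Rabs_mult, Rabs_pos_eq by (apply pow_le; lra).
    eapply Rle_trans; [|apply Hrk]. apply Rmult_le_compat_l. apply pow_le; lra. apply cc_bound.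
  - apply (tail_bound (fun k => r ^ k * dd a k t) (2 * K) q N Hq).
    intros k. rewrite Rabs_mult, Rabs_pos_eq by (apply pow_le; lra).
    eapply Rle_trans; [|apply Hrk]. apply Rmult_le_compat_l. apply pow_le; lra. apply dd_bound.
Qed.

Lemma uP_cont N t : continuous (uP N) t.
Proof. unfold uP. apply (psum_cont (fun k t => r ^ k * cc a k t)). intros k. unfold cc. cont. Qed.
Lemma vP_cont N t : continuous (vP N) t.
Proof. unfold vP. apply (psum_cont (fun k t => r ^ k * dd a k t)). intros k. unfold dd. cont. Qed.

Lemma uvS_cont t : continuous uS t /\ continuous vS t.
Proof.
  destruct unif_tails as [K [q [HK [Hq Ht]]]].
  assert (Hsm := small_tail K q Hq HK).
  split; apply of_cont_pt.
  - apply (unif_cont uP). intros; apply cont_pt_of, uP_cont.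
    intros eps He. destruct (Hsm eps He) as [N0 HN0]. exists N0. intros t'.
    eapply Rle_trans. apply (Ht N0 t'). apply HN0; lia.
  - apply (unif_cont vP). intros; apply cont_pt_of, vP_cont.
    intros eps He. destruct (Hsm eps He) as [N0 HN0]. exists N0. intros t'.
    eapply Rle_trans. apply (Ht N0 t'). apply HN0; lia.
Qed.


Lemma coef_ineq : Cmod (a n) ^ 2 * r ^ n <= Cmod (a n) * M1 a r.
Proof.
  destruct unif_tails as [K [q [HK [Hq Ht]]]].
  assert (Hsm := small_tail K q Hq HK).
  set (p := Re (a n)). set (qq := - Im (a n)).
  set (G := fun t => sqrt (uS t ^ 2 + vS t ^ 2)).
  set (Phi := fun t => phi_form p qq (uS t) (vS t) n t).
  set (PhiN := fun N t => phi_form p qq (uP N t) (vP N t) n t).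
  assert (HM1 : M1 a r = / (2 * PI) * RInt G 0 (2 * PI)).
  { unfold M1. f_equal. apply RInt_ext. intros x _. rewrite fval_circle. reflexivity. }
  assert (Hpq : sqrt (p ^ 2 + qq ^ 2) = Cmod (a n)).
  { unfold Cmod, p, qq, Re, Im. f_equal. ring. }
  assert (HcG : forall t, continuous G t).
  { intros t. destruct (uvS_cont t) as [H1 H2]. unfold G.
    apply (continuous_comp (fun t => uS t ^ 2 + vS t ^ 2) sqrt).
    - simpl. cont.
    - apply of_cont_pt, continuity_pt_sqrt. pose proof (pow2_ge_0 (uS t)); pose proof (pow2_ge_0 (vS t)). lra. }
  assert (HcPhi : forall t, continuous Phi t).
  { intros t. destruct (uvS_cont t) as [H1 H2]. unfold Phi, phi_form. cont. }
  assert (HcPhiN : forall N t, continuous (PhiN N) t).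
  { intros N t. pose proof (uP_cont N t). pose proof (vP_cont N t). unfold PhiN, phi_form. cont. }
  assert (HexG : ex_RInt G 0 (2 * PI)) by (apply exRc; auto).
  assert (HexPhi : ex_RInt Phi 0 (2 * PI)) by (apply exRc; auto).
  assert (HexPhiN : forall N, ex_RInt (PhiN N) 0 (2 * PI)) by (intros; apply exRc; auto).
  assert (HPI := PI_RGT_0).
  assert (Hmain : r ^ n * Cmod (a n) ^ 2 * (2 * PI) <= Cmod (a n) * RInt G 0 (2 * PI)).
  { apply (eps_le _ _ (2 * PI * (2 * Cmod (a n)))).
    { pose proof (Cmod_ge_0 (a n)). nra. }
    intros eps He. destruct (Hsm eps He) as [N0 HN0].
    set (N := S (max N0 n)).
    assert (HNn : (n < N)%nat) by (unfold N; lia).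
    assert (HIN : RInt (PhiN N) 0 (2 * PI) = r ^ n * Cmod (a n) ^ 2 * (2 * PI)).
    { apply is_RInt_unique. eapply is_RInt_ext; [|apply (phiN_int a r n N HNn)].
      intros x _. unfold PhiN, uP, vP, p, qq. rewrite phiN_eq. reflexivity. }
    assert (Hdiff : Rabs (RInt (fun t => Phi t - PhiN N t) 0 (2 * PI)) <= (2 * PI - 0) * (2 * Cmod (a n) * eps)).
    { apply abs_RInt_le_const. lra.
      apply (ex_RInt_minus (V:=R_NormedModule) Phi (PhiN N)); auto.
      intros t _. unfold Phi, PhiN. rewrite phi_form_minus.
      eapply Rle_trans. apply phi_form_bound. rewrite Hpq.
      replace (2 * Cmod (a n) * eps) with (Cmod (a n) * (eps + eps)) by ring.
      apply Rmult_le_compat_l. apply Cmod_ge_0.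
      eapply Rle_trans. apply sqrt_le_sum.
      destruct (Ht N t) as [T1 T2]. pose proof (HN0 N ltac:(unfold N; lia)). lra. }
    assert (HRm : RInt (fun t => Phi t - PhiN N t) 0 (2 * PI) = RInt Phi 0 (2 * PI) - RInt (PhiN N) 0 (2 * PI)).
    { pose proof (RInt_minus (V:=R_CompleteNormedModule) Phi (PhiN N) 0 (2 * PI) HexPhi (HexPhiN N)) as H. exact H. }
    assert (Hle : RInt Phi 0 (2 * PI) <= RInt (fun t => Cmod (a n) * G t) 0 (2 * PI)).
    { apply RInt_le. lra. auto. apply exRc. intros; cont. apply HcG.
      intros t _. unfold Phi, G. eapply Rle_trans. apply Rle_abs. eapply Rle_trans. apply phi_form_bound.
      rewrite Hpq. lra. }
    assert (HS : RInt (fun t => Cmod (a n) * G t) 0 (2 * PI) = Cmod (a n) * RInt G 0 (2 * PI)).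
    { pose proof (RInt_scal (V:=R_CompleteNormedModule) G 0 (2 * PI) (Cmod (a n)) HexG) as H. exact H. }
    rewrite HRm, HIN in Hdiff. rewrite HS in Hle.
    apply Rabs_le_between in Hdiff || (unfold Rabs in Hdiff; destruct Rcase_abs in Hdiff).
    all: lra. }
  rewrite HM1.
  assert (E : Cmod (a n) * (/ (2 * PI) * RInt G 0 (2 * PI)) = Cmod (a n) * RInt G 0 (2 * PI) / (2 * PI)) by (field; lra).
  rewrite E. apply Rmult_le_reg_r with (2 * PI). lra.
  replace (Cmod (a n) * RInt G 0 (2 * PI) / (2 * PI) * (2 * PI)) with (Cmod (a n) * RInt G 0 (2 * PI)) by (field; lra).
  lra.
Qed.

End Coef.


Lemma bernoulli (x : R) n : 0 <= x <= 1 -> 1 - INR n * x <= (1 - x) ^ n.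
Proof.
  intros Hx. induction n as [|n IH]. simpl. lra.
  rewrite S_INR. simpl pow. pose proof (pos_INR n).
  assert (0 <= 1 - x) by lra. nra.
Qed.

Lemma coef_le (a : seqC) (M : R) : analytic_on_U a -> H1_norm_le a M ->
  forall n, Cmod (a n) <= Rmax M 0.
Proof.
  intros Ha HM n.
  destruct (Req_dec (Cmod (a n)) 0) as [E|Hne].
  { rewrite E. apply Rmax_r. }
  set (c := Cmod (a n)).
  assert (Hc : 0 < c) by (pose proof (Cmod_ge_0 (a n)); unfold c in *; lra).
  assert (Hr : forall r, 0 < r < 1 -> c * r ^ n <= M).
  { intros r Hr. pose proof (coef_ineq a r n Ha Hr) as H.
    specialize (HM r ltac:(lra)). fold c in H.
    apply Rmult_le_reg_l with c; auto.
    assert (c ^ 2 * r ^ n = c * (c * r ^ n)) by ring. nra. }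
  destruct (Rle_dec c M) as [HcM|HcM].
  { eapply Rle_trans; [apply HcM|apply Rmax_l]. }
  exfalso.
  set (d := Rmin (1/2) ((c - M) / (2 * c * (INR n + 1)))).
  assert (Hd : 0 < d).
  { unfold d. apply Rmin_glb_lt. lra. apply Rdiv_lt_0_compat. lra. pose proof (pos_INR n). nra. }
  assert (Hd1 : d <= 1/2) by apply Rmin_l.
  assert (Hd2 : d <= (c - M) / (2 * c * (INR n + 1))) by apply Rmin_r.
  specialize (Hr (1 - d) ltac:(lra)).
  pose proof (bernoulli d n ltac:(lra)).
  assert (c * (INR n * d) < c - M).
  { pose proof (pos_INR n).
    apply Rle_lt_trans with (c * (INR n * ((c - M) / (2 * c * (INR n + 1))))).
    apply Rmult_le_compat_l. lra. apply Rmult_le_compat_l; lra.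
    replace (c * (INR n * ((c - M) / (2 * c * (INR n + 1))))) with ((c - M) * (INR n / (2 * (INR n + 1)))) by (field; lra).
    assert (INR n / (2 * (INR n + 1)) < 1).
    { apply Rmult_lt_reg_r with (2 * (INR n + 1)). lra. unfold Rdiv. rewrite Rmult_assoc, Rinv_l; lra. }
    nra. }
  nra.
Qed.

Lemma mono_of (f : nat -> nat) : (forall i, (f i < f (S i))%nat) ->
  (forall a b, (a < b)%nat -> (f a < f b)%nat) /\ (forall m, (m <= f m)%nat).
Proof.
  intros H. split.
  - intros a b Hab. induction Hab. apply H. specialize (H m). lia.
  - induction m. lia. specialize (H m). lia.
Qed.

Lemma extract (x : nat -> R) M : (forall k, Rabs (x k) <= M) ->
  exists phi (l : R), (forall i, (phi i < phi (S i))%nat) /\ is_lim_seq (fun i => x (phi i)) l.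
Proof.
  intros HM. destruct (ex_LimSup_seq x) as [L HL].
  destruct L as [l| |].
  2:{ exfalso. destruct (HL M 0%nat) as [k [_ Hk]]. specialize (HM k).
      apply Rabs_le_between in HM. lra. }
  2:{ exfalso. destruct (HL (- M - 1)) as [N HN]. specialize (HN N (le_n _)). specialize (HM N).
      apply Rabs_le_between in HM. lra. }
  assert (P : forall N i, exists k, (N <= k)%nat /\ Rabs (x k - l) < / (INR i + 1)).
  { intros N i. assert (Hp : 0 < / (INR i + 1)) by (apply Rinv_0_lt_compat; pose proof (pos_INR i); lra).
    destruct (HL (mkposreal _ Hp)) as [H1 [N1 H2]]. simpl in *.
    destruct (H1 (max N N1)) as [k [Hk Hk2]]. exists k. split. lia.
    specialize (H2 k ltac:(lia)). apply Rabs_def1; lra. }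
  set (sel := fun N i => proj1_sig (constructive_indefinite_description _ (P N i))).
  assert (Hsel : forall N i, (N <= sel N i)%nat /\ Rabs (x (sel N i) - l) < / (INR i + 1)).
  { intros N i. unfold sel. destruct (constructive_indefinite_description _ (P N i)). auto. }
  set (phi := fix phi i := match i with O => sel O O | S i => sel (S (phi i)) (S i) end).
  exists phi, l. split.
  - intros i. simpl. destruct (Hsel (S (phi i)) (S i)). lia.
  - apply is_lim_seq_Reals. intros eps He.
    destruct (archimed (/ eps)) as [H1 _].
    assert (Hz : (0 <= Z.to_nat (up (/ eps)))%nat) by lia.
    exists (Z.to_nat (up (/ eps))). intros i Hi. unfold R_dist.
    assert (Hb : Rabs (x (phi i) - l) < / (INR i + 1)).
    { destruct i; simpl. apply Hsel. apply Hsel. }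
    eapply Rlt_le_trans. apply Hb.
    assert (INR (Z.to_nat (up (/ eps))) <= INR i) by (apply le_INR; lia).
    assert (/ eps < INR i + 1).
    { assert (IZR (up (/ eps)) <= INR (Z.to_nat (up (/ eps))) + 1).
      { destruct (Z.lt_ge_cases (up (/ eps)) 0) as [Hlt|Hge].
        - pose proof (pos_INR (Z.to_nat (up (/ eps)))). assert (IZR (up (/eps)) < 0) by (apply IZR_lt; auto). lra.
        - rewrite INR_IZR_INZ, Z2Nat.id by lia. lra. }
      lra. }
    rewrite <- (Rinv_inv eps). apply Rlt_le. apply Rinv_lt_contravar.
    apply Rmult_lt_0_compat. apply Rinv_0_lt_compat; lra. pose proof (pos_INR i); lra. auto.
Qed.


Lemma filterlim_ge (chi : nat -> nat) : (forall k, (k <= chi k)%nat) ->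
  filterlim chi eventually eventually.
Proof.
  intros H P [N HN]. exists N. intros k Hk. apply HN. specialize (H k). lia.
Qed.

Section Diag.
Variable u : nat -> seqC.
Variable M : R.
Hypothesis HM : forall k n, Cmod (u k n) <= M.

Lemma ext_ex (x : nat -> R) : exists phi : nat -> nat, (forall i, (phi i < phi (S i))%nat) /\
  ((forall k, Rabs (x k) <= M) -> exists l : R, is_lim_seq (fun i => x (phi i)) l).
Proof.
  destruct (classic (forall k, Rabs (x k) <= M)) as [H|H].
  - destruct (extract x M H) as [phi [l [H1 H2]]]. exists phi. split; auto. intros; exists l; auto.
  - exists (fun i => i). split. intros; lia. intros H'; contradiction.
Qed.

Definition ext (x : nat -> R) : nat -> nat := proj1_sig (constructive_indefinite_description _ (ext_ex x)).

Lemma ext_spec x : (forall i, (ext x i < ext x (S i))%nat) /\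
  ((forall k, Rabs (x k) <= M) -> exists l : R, is_lim_seq (fun i => x (ext x i)) l).
Proof. unfold ext. destruct (constructive_indefinite_description _ (ext_ex x)). auto. Qed.

Definition phi1 (psi : nat -> nat) n := ext (fun m => Re (u (psi m) n)).
Definition phi2 (psi : nat -> nat) n := ext (fun m => Im (u (psi (phi1 psi n m)) n)).
Definition step (psi : nat -> nat) n m := phi1 psi n (phi2 psi n m).

Fixpoint Psi (n : nat) : nat -> nat :=
  match n with O => fun m => m | S n => fun m => Psi n (step (Psi n) n m) end.

Lemma step_inc psi n i : (step psi n i < step psi n (S i))%nat.
Proof.
  unfold step. destruct (ext_spec (fun m => Im (u (psi (phi1 psi n m)) n))) as [H2 _].
  destruct (ext_spec (fun m => Re (u (psi m) n))) as [H1 _].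
  apply (proj1 (mono_of _ H1)). apply H2.
Qed.

Lemma step_ge psi n m : (m <= step psi n m)%nat.
Proof. apply (proj2 (mono_of _ (step_inc psi n))). Qed.

Lemma Psi_inc n i : (Psi n i < Psi n (S i))%nat.
Proof.
  revert i. induction n; intros i; simpl. lia.
  apply (proj1 (mono_of _ IHn)). apply step_inc.
Qed.

Lemma Re_bd k n : Rabs (Re (u k n)) <= M.
Proof. eapply Rle_trans. apply re_le_Cmod. apply HM. Qed.
Lemma Im_bd k n : Rabs (Im (u k n)) <= M.
Proof. eapply Rle_trans. apply im_le_Cmod. apply HM. Qed.

Lemma Psi_conv n : exists l1 l2 : R,
  is_lim_seq (fun m => Re (u (Psi (S n) m) n)) l1 /\
  is_lim_seq (fun m => Im (u (Psi (S n) m) n)) l2.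
Proof.
  simpl. set (psi := Psi n).
  destruct (ext_spec (fun m => Re (u (psi m) n))) as [H1a H1b].
  destruct (H1b (fun k => Re_bd _ _)) as [l1 Hl1].
  destruct (ext_spec (fun m => Im (u (psi (phi1 psi n m)) n))) as [H2a H2b].
  destruct (H2b (fun k => Im_bd _ _)) as [l2 Hl2].
  exists l1, l2. split.
  - unfold step. apply (is_lim_seq_subseq (fun i => Re (u (psi (ext (fun m => Re (u (psi m) n)) i)) n)) l1 (phi2 psi n)).
    apply eventually_subseq. apply H2a. exact Hl1.
  - unfold step. exact Hl2.
Qed.

Fixpoint Rho (n j : nat) : nat -> nat :=
  match j with O => fun m => m | S j => fun m => Rho n j (step (Psi (n + j)) (n + j) m) end.

Lemma Rho_eq n j m : Psi (n + j) m = Psi n (Rho n j m).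
Proof.
  revert m. induction j; intros m; simpl.
  - rewrite Nat.add_0_r. reflexivity.
  - rewrite Nat.add_succ_r. simpl. apply IHj.
Qed.

Lemma Rho_ge n j m : (m <= Rho n j m)%nat.
Proof.
  revert m. induction j; intros m; simpl. lia.
  eapply Nat.le_trans. apply step_ge. apply IHj.
Qed.

Definition D k := Psi (S k) k.

Lemma D_inc k : (D k < D (S k))%nat.
Proof.
  unfold D. change (Psi (S (S k)) (S k)) with (Psi (S k) (step (Psi (S k)) (S k) (S k))).
  apply (proj1 (mono_of _ (Psi_inc (S k)))). pose proof (step_ge (Psi (S k)) (S k) (S k)). lia.
Qed.

Lemma D_sub (x : nat -> R) n l : is_lim_seq (fun m => x (Psi (S n) m)) l ->
  is_lim_seq (fun k => x (D k)) l.
Proof.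
  intros H. apply (is_lim_seq_incr_n _ (S n)).
  set (chi := fun k => Rho (S n) (S k) (k + S n)).
  assert (E : forall k, D (k + S n) = Psi (S n) (chi k)).
  { intros k. unfold D, chi. rewrite <- Rho_eq. f_equal. lia. }
  eapply is_lim_seq_ext. intros k. rewrite E. reflexivity.
  apply (is_lim_seq_subseq (fun m => x (Psi (S n) m)) l chi); auto.
  apply filterlim_ge. intros k. unfold chi. pose proof (Rho_ge (S n) (S k) (k + S n)). lia.
Qed.

Lemma diag : exists g : seqC, (forall n, is_lim_seq (fun k => Re (u (D k) n)) (Re (g n)) /\
   is_lim_seq (fun k => Im (u (D k) n)) (Im (g n))).
Proof.
  exists (fun n => (real (Lim_seq (fun m => Re (u (Psi (S n) m) n))),
                    real (Lim_seq (fun m => Im (u (Psi (S n) m) n))))).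
  intros n. destruct (Psi_conv n) as [l1 [l2 [H1 H2]]].
  rewrite (is_lim_seq_unique _ _ H1), (is_lim_seq_unique _ _ H2). simpl. split.
  - apply (D_sub (fun k => Re (u k n)) n l1 H1).
  - apply (D_sub (fun k => Im (u k n)) n l2 H2).
Qed.

End Diag.


Lemma psum_nonneg (x : nat -> R) N : (forall k, 0 <= x k) -> 0 <= psum x N.
Proof. intros H. induction N; simpl. lra. specialize (H N). lra. Qed.

Lemma psum_term (x : nat -> R) N j : (forall k, 0 <= x k) -> (j < N)%nat -> x j <= psum x N.
Proof.
  intros H. induction N; intros Hj; simpl. lia.
  destruct (Nat.eq_dec j N) as [->|Hne].
  - pose proof (psum_nonneg x N H). lra.
  - specialize (IHN ltac:(lia)). specialize (H N). lra.
Qed.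

Lemma psum_lim (x : nat -> nat -> R) N : (forall j, is_lim_seq (fun k => x k j) 0) ->
  is_lim_seq (fun k => psum (x k) N) 0.
Proof.
  intros H. induction N; simpl.
  - apply is_lim_seq_const.
  - replace (Finite 0) with (Finite (0 + 0)) by (f_equal; ring).
    apply is_lim_seq_plus'; auto.
Qed.

Section Lat.
Variable E : seqC -> Prop.
Variable NE : seqC -> R.
Hypothesis HE : Banach_sequence_lattice E NE.

Lemma lat_scal (c : R) x : 0 <= c -> E x -> E (sscal (RtoC c) x) /\ NE (sscal (RtoC c) x) = c * NE x.
Proof.
  intros Hc Hx. destruct HE as [[[_ [_ Hs]] [[_ [_ [Hn _]]] _]] _]. split. apply Hs; auto.
  rewrite Hn by auto. rewrite Cmod_R, Rabs_pos_eq; auto.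
Qed.

Lemma lat_dom (c : R) x y : 0 <= c -> E x -> (forall n, Cmod (y n) <= c * Cmod (x n)) ->
  E y /\ NE y <= c * NE x.
Proof.
  intros Hc Hx Hy. destruct (lat_scal c x Hc Hx) as [H1 H2].
  destruct HE as [_ Hl]. destruct (Hl (sscal (RtoC c) x) y H1) as [H3 H4].
  - intros n. unfold sscal. rewrite Cmod_mult, Cmod_R, Rabs_pos_eq; auto.
  - split; auto. lra.
Qed.

Lemma lat_nonneg x : E x -> 0 <= NE x.
Proof. intros Hx. destruct HE as [[_ [[H _] _]] _]. auto. Qed.

Lemma lat_add x y : E x -> E y -> E (sadd x y) /\ NE (sadd x y) <= NE x + NE y.
Proof.
  intros Hx Hy. destruct HE as [[[_ [Ha _]] [[_ [_ [_ Ht]]] _]] _]. split; auto.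
Qed.
End Lat.

Definition Tm (lam : seqC) (m : nat) : seqC :=
  fun n => if le_lt_dec m n then RtoC (Cmod (lam n)) else RtoC 0.

Lemma Cmod_sub_le (x y : C) : Cmod (x - y) <= Cmod x + Cmod y.
Proof.
  replace (x - y)%C with (x + (- y))%C by ring. eapply Rle_trans. apply Cmod_triangle.
  replace (- y)%C with ((- (1)) * y)%C by ring. rewrite Cmod_mult, Cmod_m1. lra.
Qed.

Theorem proposition2p1
  (X : seqC -> Prop) (NX : seqC -> R) (E : seqC -> Prop) (NE : seqC -> R)
  (lam : seqC) :
  Banach_space_of_analytic_functions X NX ->
  embeds_in_H1 X NX ->
  Banach_sequence_lattice E NE ->
  order_continuous E NE ->
  E lam ->
  (forall f, X f -> E (mult_op lam f)) /\
  (exists C0 : R, forall f, X f -> NE (mult_op lam f) <= C0 * NX f) /\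
  compact_op X NX E NE (mult_op lam).
Proof.
  intros [[_ [[HNX _] _]] Han] [C0 Hemb] HE Hoc Hlam.
  set (C := Rmax C0 0).
  assert (HC : 0 <= C) by apply Rmax_r.
  assert (Hcoef : forall f, X f -> forall n, Cmod (f n) <= C * NX f).
  { intros f Hf n. pose proof (coef_le f _ (Han f Hf) (Hemb f Hf) n).
    pose proof (HNX f Hf). eapply Rle_trans. apply H.
    apply Rmax_lub. unfold C. apply Rmult_le_compat_r; auto. apply Rmax_l. nra. }
  assert (Hmf : forall f, X f -> E (mult_op lam f) /\ NE (mult_op lam f) <= (C * NX f) * NE lam).
  { intros f Hf. apply (lat_dom E NE HE); auto. pose proof (HNX f Hf). nra.
    intros n. unfold mult_op. rewrite Cmod_mult. rewrite Rmult_comm.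
    apply Rmult_le_compat_r. apply Cmod_ge_0. auto. }
  split; [|split].
  - intros f Hf. apply Hmf; auto.
  - exists (C * NE lam). intros f Hf. destruct (Hmf f Hf) as [_ H]. lra.
  - intros u Hu [B HB].
    assert (HB0 : 0 <= B) by (eapply Rle_trans; [apply (HNX _ (Hu 0%nat))|apply HB]).
    set (M := C * B).
    assert (HM0 : 0 <= M) by (unfold M; nra).
    assert (HM : forall k n, Cmod (u k n) <= M).
    { intros k n. eapply Rle_trans. apply Hcoef; auto. unfold M. apply Rmult_le_compat_l; auto. }
    destruct (diag u M HM) as [g Hg].
    set (phi := D u M).
    assert (Hgb : forall n, Cmod (g n) <= 2 * M).
    { intros n. destruct (Hg n) as [H1 H2].
      assert (Rabs (Re (g n)) <= M).
      { apply (is_lim_seq_abs _ _) in H1. simpl in H1.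
        pose proof (is_lim_seq_le _ _ _ _ (fun k => Re_bd u M HM (D u M k) n) H1 (is_lim_seq_const M)). simpl in H. auto. }
      assert (Rabs (Im (g n)) <= M).
      { apply (is_lim_seq_abs _ _) in H2. simpl in H2.
        pose proof (is_lim_seq_le _ _ _ _ (fun k => Im_bd u M HM (D u M k) n) H2 (is_lim_seq_const M)). simpl in H0. auto. }
      pose proof (Cmod_le_sum (g n)). lra. }
    exists phi, (mult_op lam g). split; [|split].
    + intros k. apply D_inc.
    + apply (lat_dom E NE HE (2 * M) lam); auto. lra. intros n. unfold mult_op.
      rewrite Cmod_mult. pose proof (Hgb n). pose proof (Cmod_ge_0 (lam n)). nra.
    +
      set (W := fun k => ssub (mult_op lam (u (phi k))) (mult_op lam g)).
      assert (HW : forall k n, Cmod (W k n) = Cmod (lam n) * Cmod (u (phi k) n - g n)).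
      { intros k n. unfold W, ssub, mult_op. rewrite <- Cmod_mult. f_equal. ring. }
      assert (HT : forall m, E (Tm lam m)).
      { intros m. apply (lat_dom E NE HE 1 lam); auto. lra. intros n. unfold Tm.
        destruct (le_lt_dec m n); rewrite Cmod_R. rewrite Rabs_pos_eq by apply Cmod_ge_0. lra.
        rewrite Rabs_R0. pose proof (Cmod_ge_0 (lam n)). lra. }
      assert (HTlim : is_lim_seq (fun m => NE (Tm lam m)) 0).
      { apply Hoc; auto.
        - intros k n. unfold Tm. destruct (le_lt_dec k n); simpl; split; try lra. apply Cmod_ge_0.
        - intros k n. unfold Tm. pose proof (Cmod_ge_0 (lam n)).
          destruct (le_lt_dec (S k) n); destruct (le_lt_dec k n); simpl; try lra; lia.
        - intros n. apply (is_lim_seq_incr_n _ (S n)).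
          eapply is_lim_seq_ext; [|apply is_lim_seq_const]. intros k. unfold Tm.
          destruct (le_lt_dec (k + S n) n). lia. reflexivity. }
      apply is_lim_seq_Reals. intros eps He.
      apply is_lim_seq_Reals in HTlim.
      destruct (HTlim (eps / (2 * (3 * M + 1)))) as [m Hm].
      { apply Rdiv_lt_0_compat; lra. }
      specialize (Hm m (le_n _)). unfold R_dist in Hm. rewrite Rminus_0_r in Hm.
      rewrite Rabs_pos_eq in Hm by (apply (lat_nonneg E NE HE); auto).
      set (del := fun k => psum (fun j => Rabs (Re (u (phi k) j) - Re (g j)) + Rabs (Im (u (phi k) j) - Im (g j))) m).
      assert (Hdel : is_lim_seq del 0).
      { unfold del. apply (psum_lim (fun k j => Rabs (Re (u (phi k) j) - Re (g j)) + Rabs (Im (u (phi k) j) - Im (g j)))).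
        intros j. destruct (Hg j) as [H1 H2].
        assert (A1 : is_lim_seq (fun k => Re (u (phi k) j) - Re (g j)) 0).
        { replace (Finite 0) with (Finite (Re (g j) - Re (g j))) by (f_equal; ring).
          apply is_lim_seq_minus'; [exact H1| apply is_lim_seq_const]. }
        assert (A2 : is_lim_seq (fun k => Im (u (phi k) j) - Im (g j)) 0).
        { replace (Finite 0) with (Finite (Im (g j) - Im (g j))) by (f_equal; ring).
          apply is_lim_seq_minus'; [exact H2| apply is_lim_seq_const]. }
        replace (Finite 0) with (Finite (0 + 0)) by (f_equal; ring).
        apply is_lim_seq_plus'; apply (proj1 (is_lim_seq_abs_0 _)); auto. }
      apply is_lim_seq_Reals in Hdel.
      pose proof (lat_nonneg E NE HE lam Hlam) as Hl0.
      destruct (Hdel (eps / (2 * (NE lam + 1)))) as [K HK].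
      { apply Rdiv_lt_0_compat; lra. }
      exists K. intros k Hk. specialize (HK k Hk). unfold R_dist in HK. rewrite Rminus_0_r in HK.
      assert (Hd0 : 0 <= del k).
      { apply psum_nonneg. intros j. pose proof (Rabs_pos (Re (u (phi k) j) - Re (g j))).
        pose proof (Rabs_pos (Im (u (phi k) j) - Im (g j))). lra. }
      rewrite Rabs_pos_eq in HK by auto.
      set (Fk := fun n => if le_lt_dec m n then RtoC 0 else W k n).
      set (Gk := fun n => if le_lt_dec m n then W k n else RtoC 0).
      assert (HF : E Fk /\ NE Fk <= del k * NE lam).
      { apply (lat_dom E NE HE); auto. intros n. unfold Fk.
        destruct (le_lt_dec m n).
        - rewrite Cmod_0. pose proof (Cmod_ge_0 (lam n)). nra.
        - rewrite HW. rewrite Rmult_comm. apply Rmult_le_compat_r. apply Cmod_ge_0.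
          eapply Rle_trans. apply Cmod_le_sum.
          apply (psum_term (fun j => Rabs (Re (u (phi k) j) - Re (g j)) + Rabs (Im (u (phi k) j) - Im (g j))) m n).
          intros j. pose proof (Rabs_pos (Re (u (phi k) j) - Re (g j))).
          pose proof (Rabs_pos (Im (u (phi k) j) - Im (g j))). lra. auto. }
      assert (HG : E Gk /\ NE Gk <= (3 * M) * NE (Tm lam m)).
      { apply (lat_dom E NE HE); auto. lra. intros n. unfold Gk, Tm.
        destruct (le_lt_dec m n).
        - rewrite HW, Cmod_R, Rabs_pos_eq by apply Cmod_ge_0. rewrite Rmult_comm.
          apply Rmult_le_compat_r. apply Cmod_ge_0.
          eapply Rle_trans. apply Cmod_sub_le. pose proof (HM (phi k) n). pose proof (Hgb n). lra.
        - rewrite Cmod_0. nra. }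
      destruct HF as [HF1 HF2]. destruct HG as [HG1 HG2].
      destruct (lat_add E NE HE Fk Gk HF1 HG1) as [HS1 HS2].
      destruct (proj2 HE (sadd Fk Gk) (W k) HS1) as [HW1 HW2].
      { intros n. unfold sadd, Fk, Gk. destruct (le_lt_dec m n).
        - replace (RtoC 0 + W k n)%C with (W k n) by ring. lra.
        - replace (W k n + RtoC 0)%C with (W k n) by ring. lra. }
      assert (HWn : 0 <= NE (W k)) by (apply (lat_nonneg E NE HE); auto).
      unfold R_dist. rewrite Rminus_0_r, Rabs_pos_eq by auto.
      change (NE (ssub (mult_op lam (u (phi k))) (mult_op lam g))) with (NE (W k)).
      assert (del k * NE lam <= eps / 2).
      { apply Rle_trans with (eps / (2 * (NE lam + 1)) * (NE lam + 1)).
        apply Rmult_le_compat; lra.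
        replace (eps / (2 * (NE lam + 1)) * (NE lam + 1)) with (eps / 2) by (field; lra). lra. }
      assert (3 * M * NE (Tm lam m) < eps / 2).
      { apply Rle_lt_trans with ((3 * M + 1) * NE (Tm lam m)).
        pose proof (lat_nonneg E NE HE _ (HT m)). nra.
        apply Rlt_le_trans with ((3 * M + 1) * (eps / (2 * (3 * M + 1)))).
        apply Rmult_lt_compat_l; lra.
        replace ((3 * M + 1) * (eps / (2 * (3 * M + 1)))) with (eps / 2) by (field; lra). lra. }
      lra.
Qed.
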